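(* For every odd integer $n\ge 3$ there exist a boolean classifier $\kappa:\{0,1\}^n\to\{0,1\}$ and a point $\mathbf v\in\{0,1\}^n$ such that, for the sample $(\mathbf v,\kappa(\mathbf v))$, some feature $i\in\mathcal F=\{1,\dots,n\}$ is relevant and $\mathrm{Sv}(i)=0$ (issue I3).
   Context: Let $\mathcal F=\{1,\dots,n\}$. A boolean classifier is a non-constant function $\kappa:\{0,1\}^n\to\{0,1\}$; a sample is a pair $(\mathbf v,c)$ with $\mathbf v\in\{0,1\}^n$ and $c=\kappa(\mathbf v)$. For $\mathcal S\subseteq\mathcal F$ let $\Upsilon(\mathcal S;\mathbf v)=\{\mathbf x\in\{0,1\}^n : x_j=v_j \text{ for all } j\in\mathcal S\}$ and, for any function $g$ on $\{0,1\}^n$, $\mathbf E[g\mid \mathbf x_{\mathcal S}=\mathbf v_{\mathcal S}]=|\Upsilon(\mathcal S;\mathbf v)|^{-1}\sum_{\mathbf x\in\Upsilon(\mathcal S;\mathbf v)}g(\mathbf x)$ (uniform distribution, independent features). The characteristic function is $\upsilon(\mathcal S)=\mathbf E[\kappa\mid\mathbf x_{\mathcal S}=\mathbf v_{\mathcal S}]$, and the SHAP score of feature $i$ is $\mathrm{Sv}(i)=\sum_{\mathcal S\subseteq\mathcal F\setminus\{i\}}\frac{|\mathcal S|!\,(n-|\mathcal S|-1)!}{n!}\big(\upsilon(\mathcal S\cup\{i\})-\upsilon(\mathcal S)\big)$. The similarity predicate is $\sigma(\mathbf x)=1$ if $\kappa(\mathbf x)=\kappa(\mathbf v)$ and $0$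 otherwise. A set $\mathcal S\subseteq\mathcal F$ is a weak abductive explanation (WAXp) if $\mathbf E[\sigma\mid\mathbf x_{\mathcal S}=\mathbf v_{\mathcal S}]=1$ (i.e. $\kappa(\mathbf x)=\kappa(\mathbf v)$ for all $\mathbf x\in\Upsilon(\mathcal S;\mathbf v)$); an abductive explanation (AXp) is a WAXp $\mathcal S$ such that $\mathcal S\setminus\{t\}$ is not a WAXp for every $t\in\mathcal S$. A feature is relevant if it belongs to at least one AXp, and irrelevant otherwise. *)

(* Defs.v *)
(* Features F = {1..n} are represented by 'I_n = {0..n-1};
   points of {0,1}^n are finite functions 'I_n -> bool; classifier values
   0/1 are booleans (interpreted as 0/1 in rat via nat_of_bool). *)
From mathcomp Require Import all_boot all_order all_algebra.
Set Implicit Arguments. Unset Strict Implicit. Unset Printing Implicit Defensive.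
Import Order.TTheory GRing.Theory Num.Theory.
Local Open Scope ring_scope.

Definition point (n : nat) := {ffun 'I_n -> bool}.
Definition classifier (n : nat) := point n -> bool.

Definition nonconstant n (kappa : classifier n) : Prop :=
  exists x y : point n, kappa x != kappa y.

Definition Upsilon n (S : {set 'I_n}) (v : point n) : {set point n} :=
  [set x : point n | [forall j in S, x j == v j]].

Definition condE n (g : point n -> rat) (S : {set 'I_n}) (v : point n) : rat :=
  (#|Upsilon S v|%:R)^-1 * \sum_(x in Upsilon S v) g x.

Definition charfun n (kappa : classifier n) (v : point n) (S : {set 'I_n}) : rat :=
  condE (fun x => (kappa x)%:R) S v.

Definition Sv n (kappa : classifier n) (v : point n) (i : 'I_n) : rat :=
  \sum_(S : {set 'I_n} | i \notin S)
    ((#|S|`! * (n - #|S| - 1)`!)%:R / (n`!)%:R) *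
    (charfun kappa v (i |: S) - charfun kappa v S).

Definition sigma n (kappa : classifier n) (v : point n) (x : point n) : rat :=
  (kappa x == kappa v)%:R.

Definition WAXp n (kappa : classifier n) (v : point n) (S : {set 'I_n}) : Prop :=
  condE (sigma kappa v) S v = 1.

Definition AXp n (kappa : classifier n) (v : point n) (S : {set 'I_n}) : Prop :=
  WAXp kappa v S /\ forall t, t \in S -> ~ WAXp kappa v (S :\ t).

Definition relevant n (kappa : classifier n) (v : point n) (i : 'I_n) : Prop :=
  exists S : {set 'I_n}, AXp kappa v S /\ i \in S.

(* Main.v *)
Require Import Defs.
From mathcomp Require Import all_boot all_order all_algebra.
From mathcomp Require Import lra zify.
Set Implicit Arguments. Unset Strict Implicit. Unset Printing Implicit Defensive.
Import Order.TTheory GRing.Theory Num.Theory.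
Local Open Scope ring_scope.

Definition trip n (i0 i1 i2 : 'I_n) (x : point n) : bool * bool * bool :=
  (x i0, x i1, x i2).

Definition compatb (b0 b1 b2 : bool) (t : bool * bool * bool) : bool :=
  [&& b0 ==> t.1.1, b1 ==> t.1.2 & b2 ==> t.2].

Definition compat n (i0 i1 i2 : 'I_n) (S : {set 'I_n}) :=
  compatb (i0 \in S) (i1 \in S) (i2 \in S).

Definition vT n : point n := [ffun => true].

Definition flip n (m : 'I_n -> bool) (x : point n) : point n := [ffun j => x j (+) m j].

Lemma flip_inj n (m : 'I_n -> bool) : injective (flip m).
Proof.
move=> x y H; apply/ffunP=> j.
have := congr1 (fun f : point n => f j) H; rewrite !ffunE.
by case: (x j); case: (y j); case: (m j).
Qed.

Lemma in_UpsT n (S : {set 'I_n}) x :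
  (x \in Upsilon S (vT n)) = [forall j in S, x j].
Proof.
rewrite inE; apply: eq_forallb => j; rewrite ffunE.
by case: (x j); case: (j \in S).
Qed.

Lemma compat_trip n (i0 i1 i2 : 'I_n) S x :
  x \in Upsilon S (vT n) -> compat i0 i1 i2 S (trip i0 i1 i2 x).
Proof.
rewrite in_UpsT => /forallP H; rewrite /compat /compatb /=.
by apply/and3P; split; apply/implyP => hj; exact: (implyP (H _) hj).
Qed.

Lemma count_le n (i0 i1 i2 : 'I_n) (d01 : i0 != i1) (d02 : i0 != i2)
  (d12 : i1 != i2) S t t' :
  compat i0 i1 i2 S t -> compat i0 i1 i2 S t' ->
  (#|[set x in Upsilon S (vT n) | trip i0 i1 i2 x == t]| <=
   #|[set x in Upsilon S (vT n) | trip i0 i1 i2 x == t']|)%N.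
Proof.
case: t => [[a b] c]; case: t' => [[a' b'] c'].
rewrite /compat /compatb /= => /and3P [h0 h1 h2] /and3P [h0' h1' h2'].
pose m := fun j : 'I_n => [|| (j == i0) && (a != a'), (j == i1) && (b != b')
   | (j == i2) && (c != c')].
rewrite -(card_imset _ (@flip_inj n m)); apply: subset_leq_card.
apply/subsetP => y /imsetP [x]; rewrite inE => /andP [Hx /eqP Ht] ->; rewrite inE.
apply/andP; split.
  rewrite in_UpsT; move: Hx; rewrite in_UpsT => /forallP Hx.
  apply/forallP => j; apply/implyP => jS; rewrite ffunE.
  move/implyP: (Hx j) => /(_ jS) ->.
  suff -> : m j = false by [].
  have e01 := negbTE d01; have e02 := negbTE d02; have e12 := negbTE d12.
  have e10 : (i1 == i0) = false by rewrite eq_sym.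
  have e20 : (i2 == i0) = false by rewrite eq_sym.
  have e21 : (i2 == i1) = false by rewrite eq_sym.
  rewrite /m; case: (eqVneq j i0) => [e|n0].
    by subst j; move: h0 h0'; rewrite jS /= => -> ->; rewrite ?e01 ?e02 ?e12 ?e10 ?e20 ?e21 /= ?andbF.
  case: (eqVneq j i1) => [e|n1].
    by subst j; move: h1 h1'; rewrite jS /= => -> ->; rewrite ?e01 ?e02 ?e12 ?e10 ?e20 ?e21 /= ?andbF.
  case: (eqVneq j i2) => [e|n2] //.
  by subst j; move: h2 h2'; rewrite jS /= => -> ->; rewrite ?e01 ?e02 ?e12 ?e10 ?e20 ?e21 /= ?andbF.
move: Ht; rewrite /trip !ffunE /m => -[-> -> ->].
have e01 := negbTE d01; have e02 := negbTE d02; have e12 := negbTE d12.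
have e10 : (i1 == i0) = false by rewrite eq_sym.
have e20 : (i2 == i0) = false by rewrite eq_sym.
have e21 : (i2 == i1) = false by rewrite eq_sym.
rewrite !eqxx e01 e02 e12 e10 e20 e21 /=.
by clear m; case: a a' b b' c c' {h0 h1 h2 h0' h1' h2'} => [] [] [] [] [] [].
Qed.

Definition Mc n (i0 i1 i2 : 'I_n) S :=
  #|[set x in Upsilon S (vT n) | trip i0 i1 i2 x == (true, true, true)]|.

Lemma compatT n (i0 i1 i2 : 'I_n) S : compat i0 i1 i2 S (true, true, true).
Proof. by rewrite /compat /compatb /= !implybT. Qed.

Lemma count_eq n (i0 i1 i2 : 'I_n) (d01 : i0 != i1) (d02 : i0 != i2)
  (d12 : i1 != i2) S t :
  compat i0 i1 i2 S t ->
  #|[set x in Upsilon S (vT n) | trip i0 i1 i2 x == t]| = Mc i0 i1 i2 S.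
Proof.
move=> ct; apply/eqP; rewrite eqn_leq.
by rewrite !count_le // compatT.
Qed.

Lemma Mc_gt0 n (i0 i1 i2 : 'I_n) S : (0 < Mc i0 i1 i2 S)%N.
Proof.
apply/card_gt0P; exists (vT n); rewrite !inE /trip !ffunE eqxx andbT.
by apply/forallP => j; rewrite ffunE eqxx implybT.
Qed.

Lemma sum_trip n (i0 i1 i2 : 'I_n) (d01 : i0 != i1) (d02 : i0 != i2)
  (d12 : i1 != i2) S (G : bool * bool * bool -> rat) :
  \sum_(x in Upsilon S (vT n)) G (trip i0 i1 i2 x) =
  (Mc i0 i1 i2 S)%:R * \sum_(t | compat i0 i1 i2 S t) G t.
Proof.
rewrite (partition_big (trip i0 i1 i2) (compat i0 i1 i2 S)) /=;
  last by move=> x; apply: compat_trip.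
rewrite big_distrr; apply: eq_bigr => t ct.
rewrite (eq_bigr (fun=> G t)); last by move=> x /andP [_ /eqP ->].
rewrite (eq_bigl (fun x => x \in [set x in Upsilon S (vT n) | trip i0 i1 i2 x == t]));
  last by move=> x; rewrite inE.
rewrite sumr_const count_eq //; apply/esym; exact: mulr_natl.
Qed.

Definition avg (K : bool * bool * bool -> bool) (b0 b1 b2 : bool) : rat :=
  (\sum_(t | compatb b0 b1 b2 t) 1)^-1 * \sum_(t | compatb b0 b1 b2 t) (K t)%:R.

Lemma charfun_eq n (i0 i1 i2 : 'I_n) (d01 : i0 != i1) (d02 : i0 != i2)
  (d12 : i1 != i2) (K : bool * bool * bool -> bool) S :
  charfun (fun x => K (trip i0 i1 i2 x)) (vT n) S =
  avg K (i0 \in S) (i1 \in S) (i2 \in S).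
Proof.
rewrite /charfun /condE /avg /=.
rewrite (sum_trip d01 d02 d12 S (fun t => (K t)%:R)).
have -> : (#|Upsilon S (vT n)|%:R : rat) = (Mc i0 i1 i2 S)%:R * \sum_(t | compat i0 i1 i2 S t) 1.
  by rewrite -(sum_trip d01 d02 d12 S (fun=> 1)) sumr_const.
rewrite invfM mulrACA mulVf ?mul1r //.
by rewrite pnatr_eq0 -lt0n Mc_gt0.
Qed.

Lemma sum3 (F : bool * bool * bool -> rat) :
  \sum_(t : bool * bool * bool) F t =
  \sum_(a : bool) \sum_(b : bool) \sum_(c : bool) F (a, b, c).
Proof.
transitivity (\sum_(ab : bool * bool) \sum_(c : bool) F (ab, c)).
  by rewrite [RHS]pair_big /=; apply: eq_bigr => [[ab c]] _.
rewrite [RHS]pair_big /=; apply: eq_bigr => [[a b]] _ //.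
Qed.
Lemma sum3c (P : pred (bool * bool * bool)) (F : bool * bool * bool -> rat) :
  \sum_(t | P t) F t =
  \sum_(a : bool) \sum_(b : bool) \sum_(c : bool) (if P (a,b,c) then F (a, b, c) else 0).
Proof. by rewrite big_mkcond sum3. Qed.
Definition K0 (t : bool * bool * bool) : bool :=
  let: (a, b, c) := t in (a != b) && (b != c).

Lemma key b1 b2 :
  (avg K0 true b1 b2 - avg K0 false b1 b2) +
  (avg K0 true (~~ b1) (~~ b2) - avg K0 false (~~ b1) (~~ b2)) = 0.
Proof.
rewrite /avg !sum3c !big_bool /=.
by case: b1; case: b2; apply/eqP; vm_compute.
Qed.

Lemma waxp_all n (kappa : classifier n) v S :
  (forall x, x \in Upsilon S v -> kappa x = kappa v) -> WAXp kappa v S.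
Proof.
move=> H; rewrite /WAXp /condE.
rewrite (eq_bigr (fun=> 1)); last by move=> x /H; rewrite /sigma => ->; rewrite eqxx.
rewrite sumr_const mulVf // pnatr_eq0 -lt0n; apply/card_gt0P; exists v.
by rewrite inE; apply/forallP => j; apply/implyP.
Qed.

Lemma waxp_not n (kappa : classifier n) v S x :
  x \in Upsilon S v -> kappa x != kappa v -> ~ WAXp kappa v S.
Proof.
move=> Hx Hk; rewrite /WAXp /condE.
have -> : (#|Upsilon S v|%:R : rat) = \sum_(y in Upsilon S v) 1 by rewrite sumr_const.
rewrite (bigD1 x) //= [X in _^-1 * X](bigD1 x) //= /sigma (negbTE Hk) add0r.
set R := \sum_(y | _) _ ; set R1 := \sum_(y | _) _.
have le : R1 <= R.
  by apply: ler_sum => y _; case: (_ == _).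
have ge : 0 <= R by apply: sumr_ge0.
have ne : 1 + R != 0 by rewrite lt0r_neq0 // ltr_wpDr.
move=> H; have : R1 = 1 + R.
  by apply: (mulfI (invr_neq0 ne)); rewrite H mulVf.
move=> E; lra.
Qed.

Definition hS n (i0 : 'I_n) (S : {set 'I_n}) : {set 'I_n} :=
  [set j | if j == i0 then j \in S else j \notin S].

Lemma hS_inv n (i0 : 'I_n) : involutive (hS i0).
Proof. by move=> S; apply/setP => j; rewrite !inE; case: (j == i0) => //; rewrite negbK. Qed.

Lemma in_hS n (i0 : 'I_n) (S : {set 'I_n}) j :
  j \in hS i0 S = if j == i0 then j \in S else j \notin S.
Proof. by rewrite inE. Qed.

Lemma card_hS n (i0 : 'I_n) (S : {set 'I_n}) : i0 \notin S ->
  #|hS i0 S| = (n - #|S| - 1)%N /\ (#|S| < n)%N.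
Proof.
move=> nS.
have -> : hS i0 S = ~: S :\ i0.
  apply/setP => j; rewrite !inE; case: (eqVneq j i0) => [->|] //=.
  by rewrite (negbTE nS).
have := cardsD1 i0 (~: S); rewrite inE nS /= => E.
have := cardsC S; rewrite card_ord => E2.
move: E E2; set a := #|S|; set b := #|~: S|; set c := #|~: S :\ i0| => E E2; split; lia.
Qed.

Lemma Sv_zero n (i0 i1 i2 : 'I_n) (d01 : i0 != i1) (d02 : i0 != i2)
  (d12 : i1 != i2) :
  Sv (fun x => K0 (trip i0 i1 i2 x)) (vT n) i0 = 0.
Proof.
rewrite /Sv.
set kap := (fun x => K0 (trip i0 i1 i2 x)).
pose f := fun (S : {set 'I_n}) => ((#|S|`! * (n - #|S| - 1)`!)%:R / (n`!)%:R) *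
   (charfun kap (vT n) (i0 |: S) - charfun kap (vT n) S) : rat.
have e10 : (i1 == i0) = false by rewrite eq_sym (negbTE d01).
have e20 : (i2 == i0) = false by rewrite eq_sym (negbTE d02).
have Hf : forall S : {set 'I_n}, i0 \notin S -> f (hS i0 S) = - f S.
  move=> S nS; rewrite /f /kap !charfun_eq //.
  rewrite !in_setU1 !in_hS eqxx e10 e20 /= (negbTE nS).
  have [-> ltS] := card_hS nS.
  have -> : (n - (n - #|S| - 1) - 1 = #|S|)%N by lia.
  have K := key (i1 \in S) (i2 \in S).
  have -> : avg K0 true (i1 \notin S) (i2 \notin S) - avg K0 false (i1 \notin S) (i2 \notin S) = - (avg K0 true (i1 \in S) (i2 \in S) - avg K0 false (i1 \in S) (i2 \in S)) by lra.
  by rewrite mulrN mulnC.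
have : \sum_(S : {set 'I_n} | i0 \notin S) f S = - \sum_(S : {set 'I_n} | i0 \notin S) f S.
  rewrite {1}(reindex_inj (inv_inj (hS_inv i0))) /= -sumrN.
  apply: eq_big => S; first by rewrite in_hS eqxx.
  by move=> nS; rewrite Hf //; rewrite in_hS eqxx in nS.
rewrite /f; set X := \sum_(S | _) _ => HX; lra.
Qed.

Theorem proposition2 (n : nat) :
  odd n -> (3 <= n)%N ->
  exists (kappa : classifier n) (v : point n),
    nonconstant kappa /\
    exists i : 'I_n, relevant kappa v i /\ Sv kappa v i = 0%R.
Proof.
move=> _ H3.
have h0 : (0 < n)%N by apply: leq_trans H3.
have h1 : (1 < n)%N by apply: leq_trans H3.
have h2 : (2 < n)%N by [].
pose i0 := Ordinal h0; pose i1 := Ordinal h1; pose i2 := Ordinal h2.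
have d01 : i0 != i1 by [].
have d02 : i0 != i2 by [].
have d12 : i1 != i2 by [].
exists (fun x => K0 (trip i0 i1 i2 x)), (vT n).
pose xa : point n := [ffun j => j == i1].
pose xb : point n := [ffun j => j != i1].
have ka : K0 (trip i0 i1 i2 xa) = true by rewrite /trip !ffunE.
have kb : K0 (trip i0 i1 i2 xb) = true by rewrite /trip !ffunE.
have kv : K0 (trip i0 i1 i2 (vT n)) = false by rewrite /trip !ffunE.
split.
  by exists xa, (vT n); rewrite ka kv.
exists i0; split; last exact: Sv_zero.
exists [set i0; i1]; split; last by rewrite !inE eqxx.
split.
  apply: waxp_all => x; rewrite in_UpsT => /forallP Hx.
  have X0 := implyP (Hx i0); have X1 := implyP (Hx i1).
  rewrite kv /trip X0 ?X1 //= ?inE ?eqxx ?orbT //.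
move=> t; rewrite !inE => /orP [] /eqP ->.
  have -> : [set i0; i1] :\ i0 = [set i1].
    apply/setP => j; rewrite !inE; case: (eqVneq j i0) => [->|] //=.
  apply: (@waxp_not _ _ _ _ xa); last by rewrite ka kv.
  rewrite in_UpsT; apply/forallP => j; apply/implyP; rewrite in_set1 => /eqP ->.
  by rewrite ffunE eqxx.
have -> : [set i0; i1] :\ i1 = [set i0].
  apply/setP => j; rewrite !inE; case: (eqVneq j i1) => [->|] //=.
  by rewrite orbF.
apply: (@waxp_not _ _ _ _ xb); last by rewrite kb kv.
rewrite in_UpsT; apply/forallP => j; apply/implyP; rewrite in_set1 => /eqP ->.
by rewrite ffunE.
Qed.
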